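(* Let $\Phi = \{\xi = (\tau_L,\delta_L,\tau_R,\delta_R) \in \mathbb{R}^4 : \tau_L > |\delta_L + 1|,\ \tau_R < -|\delta_R+1|\}$, $\Phi^{(1)} = \{\xi \in \Phi : \delta_L > 0, \delta_R > 0\}$, $\Phi^{(2)} = \{\xi \in \Phi : \delta_L < 0, \delta_R < 0\}$. Let $\alpha(\xi) = \tau_L\tau_R + (\delta_L-1)(\delta_R-1)$, $g(\xi) = (\tau_R^2 - 2\delta_R,\ \delta_R^2,\ \tau_L\tau_R - \delta_L - \delta_R,\ \delta_L\delta_R)$, and for $\xi\in\Phi$ $$\phi^+(\xi) = \delta_R - \big(\tau_R + \delta_L + \delta_R - (1+\tau_R)\lambda_L^u\big)\lambda_L^u,$$ where $\lambda_L^u > 1$ is the eigenvalue of $\begin{bmatrix}\tau_L & 1\\ -\delta_L & 0\end{bmatrix}$ of modulus greater than one. Define, for $n \ge 0$, $$\mathcal{R}^{(1)}_n = \{\xi \in \Phi^{(1)} : \phi^+(g^n(\xi)) > 0,\ \phi^+(g^{n+1}(\xi)) \le 0\},$$ and for $n \ge 1$, $$\mathcal{R}^{(2)}_n = \{\xi \in \Phi^{(2)} : \phi^+(g^n(\xi)) > 0,\ \phi^+(g^{n+1}(\xi)) \le 0,\ \alpha(\xi) < 0\}.$$ If $\xi \in \mathcal{R}^{(2)}_n$ with $n \ge 1$, then $g(\xi) \in \mathcal{R}^{(1)}_{n-1}$.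
   Context: $g^n$ denotes the $n$-fold composition of $g$; the conditions in the set definitions are understood to include that the relevant iterates $g^k(\xi)$ lie in $\Phi$, so that $\phi^+$ is defined at them. *)

(* Defs.v *)
From Stdlib Require Import Reals.
Open Scope R_scope.

Record xi4 : Type := mkXi { tL : R; dL : R; tR : R; dR : R }.

Definition inPhi (x : xi4) : Prop :=
  tL x > Rabs (dL x + 1) /\ tR x < - Rabs (dR x + 1).

Definition inPhi1 (x : xi4) : Prop := inPhi x /\ dL x > 0 /\ dR x > 0.
Definition inPhi2 (x : xi4) : Prop := inPhi x /\ dL x < 0 /\ dR x < 0.

Definition alpha (x : xi4) : R := tL x * tR x + (dL x - 1) * (dR x - 1).

Definition g (x : xi4) : xi4 :=
  mkXi (tR x ^ 2 - 2 * dR x) (dR x ^ 2)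
       (tL x * tR x - dL x - dR x) (dL x * dR x).

(* Eigenvalue of [[tau_L, 1], [-delta_L, 0]] of modulus > 1, i.e. the larger
   root of lambda^2 - tau_L lambda + delta_L (real and > 1 on Phi). *)
Definition lambdaLu (x : xi4) : R :=
  (tL x + sqrt (tL x ^ 2 - 4 * dL x)) / 2.

Definition phi_plus (x : xi4) : R :=
  dR x - (tR x + dL x + dR x - (1 + tR x) * lambdaLu x) * lambdaLu x.

Definition giter (n : nat) (x : xi4) : xi4 := Nat.iter n g x.

Definition inR1 (n : nat) (x : xi4) : Prop :=
  inPhi1 x /\ inPhi (giter n x) /\ inPhi (giter (S n) x) /\
  phi_plus (giter n x) > 0 /\ phi_plus (giter (S n) x) <= 0.

Definition inR2 (n : nat) (x : xi4) : Prop :=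
  inPhi2 x /\ inPhi (giter n x) /\ inPhi (giter (S n) x) /\
  phi_plus (giter n x) > 0 /\ phi_plus (giter (S n) x) <= 0 /\ alpha x < 0.

(* Main.v *)
Require Import Defs.
From Stdlib Require Import Reals Lra Lia Psatz.
Open Scope R_scope.

Lemma iter_g_shift (k : nat) (x : xi4) : giter k (g x) = giter (S k) x.
Proof.
  unfold giter. induction k as [|k IH]; simpl; auto.
  simpl in IH. rewrite IH. reflexivity.
Qed.

Lemma g_phi1 (x : xi4) : inPhi2 x -> alpha x < 0 -> inPhi1 (g x).
Proof.
  unfold inPhi1, inPhi2, inPhi, alpha, g; simpl.
  intros [[H1 H2] [H3 H4]] Ha.
  assert (HdR : dR x * dR x > 0) by nra.
  assert (HdLR : dL x * dR x > 0) by nra.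
  rewrite !Rabs_right by nra.
  revert H1 H2; unfold Rabs; destruct (Rcase_abs (dL x + 1));
   destruct (Rcase_abs (dR x + 1)); intros; repeat split; nra.
Qed.

Theorem proposition7p1 (n : nat) (x : xi4) :
  (1 <= n)%nat -> inR2 n x -> inR1 (n - 1) (g x).
Proof.
  intros Hn H. destruct n as [|m]; [lia|].
  replace (S m - 1)%nat with m by lia.
  destruct H as (H1 & H2 & H3 & H4 & H5 & H6).
  unfold inR1. rewrite !iter_g_shift.
  refine (conj (g_phi1 x H1 H6) (conj H2 (conj H3 (conj H4 H5)))).
Qed.
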